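(* There exists a strongly oriented graph $D$ such that $\overrightarrow{hn}_{g}(D)=m(D)-n(D)$, where $n(D)$ and $m(D)$ denote the numbers of vertices and arcs of $D$.
   Context: An oriented graph is a digraph obtained from a finite simple graph by orienting each edge in exactly one direction. It is strongly oriented if for every ordered pair $u,v$ of distinct vertices there is a directed path from $u$ to $v$. The geodetic interval function $I_g$ assigns to $(u,v)$ the set of vertices on some shortest directed $(u,v)$-path or some shortest directed $(v,u)$-path. For $S\subseteq V(D)$, $I_g(S)=\bigcup_{u,v\in S}I_g(u,v)$; $C$ is convex if $I_g(C)=C$; the convex hull of $S$ is the smallest convex set containing $S$. A hull set is a set whose convex hull is $V(D)$, and $\overrightarrow{hn}_{g}(D)$ is the minimum size of a hull set. *)

(* Defs.v *)
(* A digraph on a finite vertex type T is an arc relation a : rel T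
   (a x y means there is an arc x -> y). *)
From mathcomp Require Import all_boot all_algebra.
Set Implicit Arguments. Unset Strict Implicit. Unset Printing Implicit Defensive.

Section Oriented.
Variable T : finType.
Variable a : rel T.

Definition oriented : Prop :=
  (forall x, ~~ a x x) /\ (forall x y, a x y -> ~~ a y x).

(* p is (the tail of) a directed walk u = x0 -> x1 -> ... -> v, vertex list u :: p,
   length size p *)
Definition dipath (u v : T) (p : seq T) : Prop :=
  path a u p /\ last u p = v.

Definition strongly_oriented : Prop :=
  oriented /\ forall u v : T, u != v -> exists p, dipath u v p.

Definition shortest_dipath (u v : T) (p : seq T) : Prop :=
  dipath u v p /\ forall q, dipath u v q -> size p <= size q.

Definition in_Ig (u v w : T) : Prop :=
  exists p, (shortest_dipath u v p /\ w \in u :: p)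
         \/ (shortest_dipath v u p /\ w \in v :: p).

Definition in_IgS (S : {set T}) (w : T) : Prop :=
  exists u v, [/\ u \in S, v \in S & in_Ig u v w].

Definition convex (C : {set T}) : Prop :=
  forall w, in_IgS C w <-> w \in C.

Definition is_convex_hull (S H : {set T}) : Prop :=
  [/\ convex H, S \subset H & forall C, convex C -> S \subset C -> H \subset C].

Definition hull_set (S : {set T}) : Prop := is_convex_hull S setT.

Definition is_hull_number (k : nat) : Prop :=
  (exists S, hull_set S /\ #|S| = k) /\ (forall S, hull_set S -> k <= #|S|).

Definition num_arcs : nat := #|[set p : T * T | a p.1 p.2]|.

End Oriented.

(* Main.v *)
Require Import Defs.
From mathcomp Require Import all_boot all_algebra.
Set Implicit Arguments. Unset Strict Implicit.

Section Gen.
Variable T : finType.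
Variable a : rel T.

Lemma in_Ig_refl w : in_Ig a w w w.
Proof.
exists [::]; left; split; last by rewrite inE eqxx.
split; first by split.
by move=> q _.
Qed.

Lemma in_Ig_same u w : in_Ig a u u w -> w = u.
Proof.
case=> p [[[_ H] Hw]|[[_ H] Hw]];
  (have : size p <= 0 by apply: (H [::]));
  by case: p Hw H => //=; rewrite mem_seq1 => /eqP.
Qed.

Lemma small_convex (S : {set T}) : #|S| <= 1 -> convex a S.
Proof.
move=> HS w; split.
- case=> u [v [Hu Hv HI]].
  have Euv : u = v by move/card_le1_eqP: HS; apply.
  by subst v; rewrite (in_Ig_same HI).
- move=> Hw; exists w, w; split => //; exact: in_Ig_refl.
Qed.

End Gen.

Definition arcs : seq (nat * nat) := [:: (0,1);(1,2);(2,3);(3,0);(0,2);(1,3)]%N.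
Definition ex4 : rel 'I_4 := fun x y => ((x : nat), (y : nat)) \in arcs.
Definition o0 : 'I_4 := @Ordinal 4 0 isT.
Definition o1 : 'I_4 := @Ordinal 4 1 isT.
Definition o2 : 'I_4 := @Ordinal 4 2 isT.
Definition o3 : 'I_4 := @Ordinal 4 3 isT.

Ltac fin := split; [done | apply/eqP; done].
Ltac tryp := first [ exists [:: o0]; fin | exists [:: o1]; fin | exists [:: o2]; fin | exists [:: o3]; fin
 | exists [:: o1; o2]; fin | exists [:: o2; o3]; fin | exists [:: o3; o0]; fin | exists [:: o0; o1]; fin
 | exists [:: o1; o2; o3]; fin | exists [:: o2; o3; o0]; fin | exists [:: o3; o0; o1]; fin | exists [:: o0; o1; o2]; fin].

Lemma ex4_strong : strongly_oriented ex4.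
Proof.
split; first split.
- by move=> [[|[|[|[|i]]]] Hi].
- by move=> [[|[|[|[|i]]]] Hi] [[|[|[|[|j]]]] Hj].
- move=> [[|[|[|[|i]]]] Hu] [[|[|[|[|j]]]] Hv] // _; rewrite /dipath; tryp.
Qed.

Lemma ex4_arcs : num_arcs ex4 = 6.
Proof.
rewrite /num_arcs.
have -> : [set p : 'I_4 * 'I_4 | ex4 p.1 p.2] =
  (o0,o1) |: ((o1,o2) |: ((o2,o3) |: ((o3,o0) |: ((o0,o2) |: [set (o1,o3)])))).
  apply/setP => -[[[|[|[|[|i]]]] Hi] [[|[|[|[|j]]]] Hj]]; rewrite !inE //.
by rewrite !cardsU1 cards1 !inE.
Qed.

Lemma short03 q : dipath ex4 o0 o3 q -> 2 <= size q.
Proof.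
case: q => [|x [|y q]] [Hp Hl] //; idtac.
by rewrite /= in Hl; rewrite Hl in Hp.
Qed.

Lemma in_Ig03 w : in_Ig ex4 o0 o3 w.
Proof.
case: w => [[|[|[|[|i]]]] Hi] //.
- exists [:: o1; o3]; left; split; [split; [fin | exact: short03] | by []].
- exists [:: o1; o3]; left; split; [split; [fin | exact: short03] | by []].
- exists [:: o2; o3]; left; split; [split; [fin | exact: short03] | by []].
- exists [:: o1; o3]; left; split; [split; [fin | exact: short03] | by []].
Qed.

Lemma hull03 : hull_set ex4 [set o0; o3].
Proof.
split.
- move=> w; split => // _; exists w, w; split; rewrite ?inE //; exact: in_Ig_refl.
- exact: subsetT.
- move=> C HC HS; apply/subsetP => w _; apply/(HC w).
  exists o0, o3; split; last exact: in_Ig03.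
  + by apply: (subsetP HS); rewrite !inE eqxx.
  + by apply: (subsetP HS); rewrite !inE eqxx orbT.
Qed.

Lemma hull_lb S : hull_set ex4 S -> 2 <= #|S|.
Proof.
move=> [_ HS Hmin]; rewrite leqNgt ltnS; apply/negP => Hc.
have := subset_leq_card (Hmin S (small_convex ex4 Hc) (subxx S)).
by rewrite cardsT card_ord => H; have := leq_trans H Hc.
Qed.

Theorem corollary2 :
  exists (n : nat) (a : rel 'I_n), [/\ (0 < n)%N, strongly_oriented a &
    exists k : nat, is_hull_number a k /\
      (k%:Z = (num_arcs a)%:Z - n%:Z)%R].
Proof.
exists 4, ex4; split => //; first exact: ex4_strong.
exists 2; split; last by rewrite ex4_arcs.
split; last exact: hull_lb.
by exists [set o0; o3]; split; [exact: hull03 | rewrite cards2].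
Qed.
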